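(* Suppose $\|\mu_a\|_\infty,\|\widehat\mu_a\|_\infty\le B<\infty$ a.s. for all $a$, and $\mathbb{P}\{\epsilon\le\widehat\pi_a(X)\le1-\epsilon\}=1$ for some $\epsilon>0$ and all $a$. Then $$\sup_{C\in\mathcal{C}_k}\big|\mathbb{P}\{\varphi_C(\widehat\eta)-\varphi_C(\eta)\}\big|\lesssim\max_a\|\widehat\mu_a-\mu_a\|_{\mathbb{P},1}+\max_a\|\widehat\mu_a-\mu_a\|\big(\|\widehat\mu_a-\mu_a\|+\|\widehat\pi_a-\pi_a\|\big).$$
   Context: $Z=(Y,A,X)\sim\mathbb{P}$, $A\in\mathcal{A}=\{1,\dots,p\}$. $\mu_a(X)=\mathbb{E}(Y\mid X,A=a)$, $\pi_a(X)=\mathbb{P}(A=a\mid X)$, $\mu=(\mu_1,\dots,\mu_p)^\top$, $\eta=\{\pi_a,\mu_a\}_a$; $\widehat\eta=\{\widehat\pi_a,\widehat\mu_a\}_a$ estimators held fixed under $\mathbb{P}$. $\varphi_{1,a}(Z;\eta)=\frac{\mathbb{1}(A=a)}{\pi_a(X)}\{Y-\mu_A(X)\}+\mu_a(X)$, $\varphi_{2,a}(Z;\eta)=2\mu_a(X)\frac{\mathbb{1}(A=a)}{\pi_a(X)}\{Y-\mu_A(X)\}+\mu_a^2(X)$, $\varphi_C(Z;\eta)=\sum_a\{\varphi_{2,a}(Z;\eta)-2\varphi_{1,a}(Z;\eta)[\Pi_C(\mu)]_a+[\Pi_C(\mu)]_a^2\}$, where at $\widehat\eta$ all of $\mu,\pi$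 (including inside $\Pi_C$) are replaced by $\widehat\mu,\widehat\pi$. Codebooks $C=\{c_1,\dots,c_k\}\subset\mathbb{R}^p$; $\mathcal{C}_k$ those of size $k$ in the image of $\mu$; $\Pi_C(x)=\arg\min_{c\in C}\|c-x\|_2^2$. $\|\cdot\|$ is the $L_2(\mathbb{P})$ norm, $\|f\|_{\mathbb{P},1}=\int|f|d\mathbb{P}$; $\lesssim$ inequality up to a multiplicative constant. *)

(* Defs.v *)
From HB Require Import structures.
From mathcomp Require Import all_boot all_order all_algebra.
From mathcomp Require Import all_classical all_reals all_analysis.
Set Implicit Arguments. Unset Strict Implicit. Unset Printing Implicit Defensive.
Import Order.TTheory GRing.Theory Num.Theory.
Local Open Scope classical_set_scope.
Local Open Scope ring_scope.

Section Defs.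
Variables (R : realType) (p : nat) (dX : measure_display) (TX : measurableType dX).

Definition sqdist (x y : 'I_p -> R) : R := \sum_(a < p) (x a - y a) ^+ 2.

(* Pi_C(x) = argmin_{c in C} ||c - x||^2 ; ties broken by the first index
   (in enumeration order of 'I_k); returns 0 only if C is empty. *)
Definition projC (k : nat) (C : 'I_k -> 'I_p -> R) (x : 'I_p -> R) : 'I_p -> R :=
  match [pick i | [forall j, sqdist x (C i) <= sqdist x (C j)]] with
  | Some i => C i
  | None => fun _ => 0
  end.

(* nuisance eta = (pi, mu), each indexed by a in 'I_p and a function of X *)
Definition phi1 (pi mu : 'I_p -> TX -> R) (a : 'I_p) (y : R) (b : 'I_p) (x : TX) : R :=
  ((b == a)%:R / pi a x) * (y - mu b x) + mu a x.

Definition phi2 (pi mu : 'I_p -> TX -> R) (a : 'I_p) (y : R) (b : 'I_p) (x : TX) : R :=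
  2 * mu a x * ((b == a)%:R / pi a x) * (y - mu b x) + mu a x ^+ 2.

Definition phiC (k : nat) (C : 'I_k -> 'I_p -> R) (pi mu : 'I_p -> TX -> R)
  (y : R) (b : 'I_p) (x : TX) : R :=
  let Pm := projC C (fun a => mu a x) in
  \sum_(a < p) (phi2 pi mu a y b x - 2 * phi1 pi mu a y b x * Pm a + Pm a ^+ 2).

End Defs.

(* mu_a(X) = E(Y | X, A = a): defining property of (a version of) the
   conditional expectation on the event {A = a}. *)
Definition is_outcome_regression {R : realType} {p : nat} {dT dX : measure_display}
  {T : measurableType dT} {TX : measurableType dX} (P : probability T R)
  (Y : T -> R) (A : T -> 'I_p) (X : T -> TX) (mu : 'I_p -> TX -> R) : Prop :=
  forall a, measurable_fun setT (mu a) /\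
    forall S : set TX, measurable S ->
      (\int[P]_t ((Y t * (A t == a)%:R * \1_S (X t))%:E)
       = \int[P]_t ((mu a (X t) * (A t == a)%:R * \1_S (X t))%:E))%E.

(* pi_a(X) = P(A = a | X). *)
Definition is_propensity {R : realType} {p : nat} {dT dX : measure_display}
  {T : measurableType dT} {TX : measurableType dX} (P : probability T R)
  (A : T -> 'I_p) (X : T -> TX) (pi : 'I_p -> TX -> R) : Prop :=
  forall a, measurable_fun setT (pi a) /\
    forall S : set TX, measurable S ->
      (\int[P]_t (((A t == a)%:R * \1_S (X t))%:E)
       = \int[P]_t ((pi a (X t) * \1_S (X t))%:E))%E.

(* Main.v *)
Require Import Defs.
From HB Require Import structures.
From mathcomp Require Import all_boot all_order all_algebra.
From mathcomp Require Import all_classical all_reals all_analysis.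
From mathcomp Require Import ring lra.
Import Order.TTheory GRing.Theory Num.Theory.
Import measurable_realfun.
Import HBNNSimple.
Local Open Scope classical_set_scope.
Local Open Scope ring_scope.

Lemma projC_spec (R : realType) (p k : nat) (C : 'I_k -> 'I_p -> R) x :
  (0 < k)%N -> exists i, projC C x = C i /\
    forall j, sqdist x (C i) <= sqdist x (C j).
Proof.
move=> k0; rewrite /projC; case: pickP => [i /forallP Hi|H].
  by exists i; split.
exfalso.
pose i0 := Ordinal k0.
case: (@arg_minP _ R _ i0 xpredT (fun i => sqdist x (C i)) isT) => i _ Hi.
have := H i; rewrite /=; move/negP; apply; apply/forallP => j.
exact: Hi.
Qed.

Lemma sqdist_lip (R : realType) (p : nat) (B : R) (x y c : 'I_p -> R) :
  (forall a, `|x a| <= B) -> (forall a, `|y a| <= B) -> (forall a, `|c a| <= B) ->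
  `|sqdist x c - sqdist y c| <= 4 * B * \sum_(a < p) `|x a - y a|.
Proof.
move=> bx bY bc; rewrite /sqdist -sumrB mulr_sumr.
apply: (le_trans (ler_norm_sum _ _ _)); apply: ler_sum => a _.
have -> : (x a - c a) ^+ 2 - (y a - c a) ^+ 2 = (x a - y a) * (x a + y a - 2 * c a) by ring.
rewrite normrM mulrC ler_wpM2r //.
apply: (le_trans (ler_normB _ _)); rewrite normrM (ger0_norm (_ : (0:R) <= 2)) //.
apply: (le_trans (lerD (ler_normD _ _) (lexx _))).
have := bx a; have := bY a; have := bc a; lra.
Qed.

Lemma projC_lip (R : realType) (p k : nat) (B : R) (C : 'I_k -> 'I_p -> R) (x y : 'I_p -> R) :
  (0 < k)%N ->
  (forall a, `|x a| <= B) -> (forall a, `|y a| <= B) -> (forall i a, `|C i a| <= B) ->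
  `|sqdist x (projC C x) - sqdist y (projC C y)| <= 4 * B * \sum_(a < p) `|x a - y a|.
Proof.
move=> k0 bx bY bc.
have [i [-> Hi]] := @projC_spec R p k C x k0.
have [j [-> Hj]] := @projC_spec R p k C y k0.
have L1 := @sqdist_lip _ _ _ _ _ _ bx bY (bc i).
have L2 := @sqdist_lip _ _ _ _ _ _ bx bY (bc j).
have := Hi j; have := Hj i.
move: L1 L2; rewrite !ler_norml; lra.
Qed.

Lemma measurable_inv (R : realType) : measurable_fun setT (@GRing.inv R).
Proof.
have -> : [set: R] = ~` [set 0] `|` [set 0].
  by rewrite setUC setUv.
have m0 : measurable ([set 0] : set R) by [].
apply/(measurable_funU _ (measurableC m0) m0); split.
- apply: measurable_realfun.open_continuous_measurable_fun.
    by apply: closed_openC; apply: accessible_closed_set1; apply: hausdorff_accessible; apply: Rhausdorff.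
  by move=> x; rewrite inE /= => /eqP x0; apply: inv_continuous.
- exact: measurable_fun_set1.
Qed.

Lemma phiC_eq (R : realType) (p : nat) (dX : measure_display) (TX : measurableType dX)
  (k : nat) (C : 'I_k -> 'I_p -> R) (pi mu : 'I_p -> TX -> R) y b x :
  phiC C pi mu y b x = \sum_(a < p)
    (2 * ((b == a)%:R / pi a x * (y - mu a x)) * (mu a x - projC C (fun a => mu a x) a)
     + (mu a x - projC C (fun a => mu a x) a) ^+ 2).
Proof.
rewrite /phiC /phi1 /phi2; apply: eq_bigr => a _.
have [->|ba] := eqVneq b a.
  ring.
rewrite !mul0r !mulr0 !mul0r; ring.
Qed.

Section MP.
Context (R : realType) (p k : nat) (C : 'I_k -> 'I_p -> R).
Context d (T : measurableType d) (f : 'I_p -> T -> R).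
Hypothesis mf : forall a, measurable_fun setT (f a).

Let fx t := fun a => f a t.
Let beta t : {ffun 'I_k -> bool} :=
  [ffun i => [forall j, sqdist (fx t) (C i) <= sqdist (fx t) (C j)]].
Let G (b0 : {ffun 'I_k -> bool}) : 'I_p -> R :=
  match [pick i | b0 i] with Some i => C i | None => fun _ => 0 end.
Let E (b0 : {ffun 'I_k -> bool}) : set T := [set t | beta t = b0].

Let msq i : measurable_fun setT (fun t => sqdist (fx t) (C i)).
Proof.
rewrite /sqdist; apply: measurable_sum => a.
apply: measurable_funX; apply: measurable_funB => //. exact: mf.
Qed.

Let mle i j : measurable [set t | sqdist (fx t) (C i) <= sqdist (fx t) (C j)].
Proof.
have := measurable_fun_ler (msq i) (msq j) measurableT (Y := [set true]) I.
by rewrite setTI; congr measurable; apply/seteqP; split => t /=.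
Qed.

Let mb i : measurable [set t | beta t i].
Proof.
have -> : [set t | beta t i] =
   \bigcap_(j in [set: 'I_k]) [set t | sqdist (fx t) (C i) <= sqdist (fx t) (C j)].
  apply/seteqP; split => t /=; rewrite ffunE.
    by move=> /forallP H j _; apply: H.
  by move=> H; apply/forallP => j; apply: H.
by apply: fin_bigcap_measurable => //; exact: finite_finset.
Qed.

Let mE b0 : measurable (E b0).
Proof.
have -> : E b0 = \bigcap_(i in [set: 'I_k])
   (if b0 i then [set t | beta t i] else ~` [set t | beta t i]).
  apply/seteqP; split => t /=.
    by move=> <- i _; case: ifP => // /negbT /negP.
  move=> H; apply/ffunP => i; have := H i I.
  by case: (b0 i) => //=; case: (beta t i).
apply: fin_bigcap_measurable; first exact: finite_finset.
by move=> i _; case: ifP => _; [|apply: measurableC]; apply: mb.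
Qed.

Lemma projC_beta t : projC C (fx t) = G (beta t).
Proof.
rewrite /projC /G; congr (match _ with Some i => _ | None => _ end).
by apply: eq_pick => i; rewrite /beta ffunE.
Qed.

Lemma measurable_projC b : measurable_fun setT (fun t => projC C (fx t) b).
Proof.
have -> : (fun t => projC C (fx t) b) =
   (fun t => \sum_(b0 : {ffun 'I_k -> bool}) G b0 b * \1_(E b0) t).
  apply/funext => t; rewrite projC_beta (bigD1 (beta t)) //=.
  rewrite indicE mem_set // mulr1 big1 ?addr0 // => b0 nb0.
  by rewrite indicE memNset ?mulr0 // /E /= => /eqP; rewrite eq_sym (negbTE nb0).
apply: measurable_sum => b0; apply: measurable_funM => //.
Qed.
End MP.

Section Gsec.
Context (R : realType) d dX (T : measurableType d) (TX : measurableType dX).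
Context (mu : {measure set T -> \bar R}) (X : T -> TX) (Z : T -> R).
Hypothesis mX : measurable_fun setT X.
Hypothesis mZ : measurable_fun setT Z.
Hypothesis iZ : mu.-integrable setT (EFin \o Z).
Hypothesis hZ : forall S, measurable S ->
  (\int[mu]_t ((Z t * \1_S (X t))%:E) = 0)%E.

Let iZS S : measurable S -> mu.-integrable setT (fun t => (Z t * \1_S (X t))%:E).
Proof.
move=> mS; apply: le_integrable iZ => //.
  apply/measurable_EFinP; apply: measurable_funM => //.
  by apply: measurableT_comp => //; exact: measurable_indic.
move=> t _ /=; rewrite lee_fin normrM ler_piMr //.
by rewrite indicE; case: (_ \in _); rewrite ?normr1 ?normr0.
Qed.

Let simple0 (h : {nnsfun TX >-> R}) :
  (\int[mu]_t ((Z t * h (X t))%:E) = 0)%E.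
Proof.
under eq_integral => t _.
  rewrite (fimfunEord h (X t)) mulr_sumr -sumEFin.
  over.
rewrite /= integral_sum //.
  apply: big1 => i _.
  under eq_integral => t _ do rewrite mulrCA EFinM.
  rewrite integralZl //; last first.
    by apply: iZS; exact: measurable_funPTI.
  by rewrite hZ ?mule0 //; exact: measurable_funPTI.
move=> i; under eq_fun => t do rewrite mulrCA EFinM.
apply: integrableZl => //; apply: iZS; exact: measurable_funPTI.
Qed.

Lemma G_nonneg (g : TX -> R) : measurable_fun setT g -> (forall x, 0 <= g x) ->
  mu.-integrable setT (fun t => (Z t * g (X t))%:E) ->
  (\int[mu]_t ((Z t * g (X t))%:E) = 0)%E.
Proof.
move=> mg g0 ig.
have mg' : measurable_fun setT (EFin \o g) by apply/measurable_EFinP.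
pose gn := nnsfun_approx measurableT mg'.
have g0' : forall x, setT x -> (0 <= (EFin \o g) x)%E by move=> x _; rewrite lee_fin.
have m1 : forall n, measurable_fun setT (fun t => (Z t * gn n (X t))%:E).
  move=> n; apply/measurable_EFinP; apply: measurable_funM => //.
  by apply: measurableT_comp => //.
have m2 : measurable_fun setT (fun t => (Z t * g (X t))%:E).
  by apply: measurable_int ig.
have c3 : {ae mu, forall t, setT t -> (fun n => (Z t * gn n (X t))%:E) @ \oo --> (Z t * g (X t))%:E}.
  apply: aeW => t _.
  rewrite EFinM; under eq_fun => n do rewrite EFinM.
  apply: cvgeZl => //.
  have := cvg_nnsfun_approx measurableT mg' g0' (x := X t) I.
  by [].
have i4 : mu.-integrable setT (fun t => `|(Z t * g (X t))%:E|)%E.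
  exact: integrable_abse.
have b5 : {ae mu, forall t n, setT t -> (`|(Z t * gn n (X t))%:E| <= `|(Z t * g (X t))%:E|)%E}.
  apply: aeW => t n _; rewrite lee_fin !normrM ler_wpM2l //.
  rewrite !ger0_norm //.
  rewrite -lee_fin /gn nnsfun_approxE; exact: (le_approx n g0' I).

have [_ _ H] := dominated_convergence measurableT m1 m2 c3 i4 b5.
move: H; under eq_fun => n do rewrite simple0.
move/cvg_lim => <- //; exact: lim_cst.
Qed.

Lemma G_gen (g : TX -> R) : measurable_fun setT g ->
  mu.-integrable setT (fun t => (Z t * g (X t))%:E) ->
  (\int[mu]_t ((Z t * g (X t))%:E) = 0)%E.
Proof.
move=> mg ig.
pose gp := fun x => Num.max (g x) 0.
pose gn := fun x => Num.max (- g x) 0.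
have mgp : measurable_fun setT gp.
  by apply: (measurable_maxr mg); exact: measurable_cst.
have mgn : measurable_fun setT gn.
  by apply: measurable_maxr; [apply: measurable_funN|exact: measurable_cst].
have gpn x : g x = gp x - gn x.
  rewrite /gp /gn; case: (leP 0 (g x)) => h.
    by rewrite (max_idPr (_ : - g x <= 0)) ?subr0 // oppr_le0.
  by rewrite (max_idPl (_ : 0 <= - g x)) ?sub0r ?opprK // oppr_ge0 ltW.
have igp : mu.-integrable setT (EFin \o (fun t => Z t * gp (X t))).
  apply: le_integrable ig => //.
    apply/measurable_EFinP; apply: measurable_funM => //.
    exact: measurableT_comp.
  move=> t _ /=; rewrite lee_fin !normrM ler_wpM2l // /gp.
  case: (leP 0 (g (X t))) => h //.
  by rewrite normr0.
have ign : mu.-integrable setT (EFin \o (fun t => Z t * gn (X t))).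
  apply: le_integrable ig => //.
    apply/measurable_EFinP; apply: measurable_funM => //.
    exact: measurableT_comp.
  move=> t _ /=; rewrite lee_fin !normrM ler_wpM2l // /gn.
  case: (leP 0 (g (X t))) => h.
    by rewrite (max_idPr (_ : - g (X t) <= 0)) ?normr0 // oppr_le0.
  by rewrite (max_idPl (_ : 0 <= - g (X t))) ?normrN // oppr_ge0 ltW.
under eq_integral => t _ do rewrite gpn mulrBr EFinB.
rewrite integralB_EFin //.
rewrite (G_nonneg _ mgp) //; last by move=> x; rewrite /gp le_max lexx orbT.
rewrite (G_nonneg _ mgn) ?subee //; by move=> x; rewrite /gn le_max lexx orbT.
Qed.
End Gsec.

Section IntHelp.
Context (R : realType) d (T : measurableType d) (P : probability T R).

Lemma int_dom (f h : T -> R) : measurable_fun setT f ->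
  P.-integrable setT (EFin \o h) -> (forall t, `|f t| <= h t) ->
  P.-integrable setT (EFin \o f).
Proof.
move=> mf ih fh; apply: le_integrable ih => //.
  exact/measurable_EFinP.
move=> t _ /=; rewrite lee_fin; apply: (le_trans (fh t)); exact: ler_norm.
Qed.

Lemma int_cst (c : R) : P.-integrable setT (EFin \o (fun _ : T => c)).
Proof. exact: finite_measure_integrable_cst. Qed.

Lemma int_abs (f : T -> R) : P.-integrable setT (EFin \o f) ->
  P.-integrable setT (EFin \o (fun t => `|f t|)).
Proof.
move=> fi; have := integrable_abse fi.
by apply: eq_integrable => // t _.
Qed.

Lemma int_add (f h : T -> R) : P.-integrable setT (EFin \o f) ->
  P.-integrable setT (EFin \o h) -> P.-integrable setT (EFin \o (fun t => f t + h t)).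
Proof.
move=> fi hi; have := integrableD measurableT fi hi.
by apply: eq_integrable => // t _.
Qed.

Lemma int_scale (c : R) (f : T -> R) : P.-integrable setT (EFin \o f) ->
  P.-integrable setT (EFin \o (fun t => c * f t)).
Proof.
move=> fi; have := integrableZl measurableT c fi.
by apply: eq_integrable => // t _ /=; rewrite EFinM.
Qed.

Lemma int_bdd (f : T -> R) (M : R) : measurable_fun setT f ->
  (forall t, `|f t| <= M) -> P.-integrable setT (EFin \o f).
Proof. by move=> mf fM; exact: (@int_dom f (fun _ => M) mf (int_cst M) fM). Qed.

End IntHelp.
Arguments int_dom {R d T P f h}.
Arguments int_cst {R d T P}.
Arguments int_abs {R d T P f}.
Arguments int_add {R d T P f h}.
Arguments int_scale {R d T P} c {f}.
Arguments int_bdd {R d T P f} M.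

Section Core.
Context (R : realType) (p : nat) (B eps : R).
Hypothesis heps : 0 < eps.
Hypothesis B0 : 0 <= B.
Context (dT dX : measure_display) (T : measurableType dT) (TX : measurableType dX)
  (P : probability T R) (Y : T -> R) (A : T -> 'I_p) (X : T -> TX)
  (mu pi muh pih : 'I_p -> TX -> R).
Hypotheses (mY : measurable_fun setT Y) (mX : measurable_fun setT X)
  (mA : forall a, measurable (A @^-1` [set a]))
  (mmuh : forall a, measurable_fun setT (muh a))
  (mpih : forall a, measurable_fun setT (pih a))
  (iY : P.-integrable setT (EFin \o Y))
  (hOR : is_outcome_regression P Y A X mu)
  (mpi : forall a, measurable_fun setT (pi a))
  (iphi : forall a, P.-integrable setT (fun t => (phi1 pi mu a (Y t) (A t) (X t))%:E))
  (bmu : forall a x, `|mu a x| <= B)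
  (bmuh : forall a x, `|muh a x| <= B)
  (bpih : forall a x, eps <= pih a x).
Context (k : nat) (C : 'I_k -> 'I_p -> R).
Hypotheses (k0 : (0 < k)%N) (hC : forall i, exists x, C i = (fun a => mu a x)).

Let mmu a : measurable_fun setT (mu a) := (hOR a).1.
Let I a t : R := (A t == a)%:R.
Let Pm x := projC C (fun a => mu a x).
Let Ph x := projC C (fun a => muh a x).
Let gh a x := (muh a x - Ph x a) / pih a x.
Let g a x := (mu a x - Pm x a) / pi a x.
Let Z a t := I a t * (Y t - mu a (X t)).
Let F2 t := \sum_(a < p) (2 * (I a t * (mu a (X t) - muh a (X t))) * gh a (X t))
   + \sum_(a < p) ((muh a (X t) - Ph (X t) a) ^+ 2 - (mu a (X t) - Pm (X t) a) ^+ 2).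
Let KK := 4 * B / eps + 4 * B.

Let I_indic a t : I a t = \1_(A @^-1` [set a]) t.
Proof.
rewrite /I indicE; case: eqP => [<-|h].
  by rewrite mem_set.
by rewrite memNset.
Qed.

Let mI a : measurable_fun setT (I a).
Proof.
have -> : I a = \1_(A @^-1` [set a]) by apply/funext => t; exact: I_indic.
exact: measurable_indic.
Qed.

Let bI a t : `|I a t| <= 1.
Proof. by rewrite /I; case: (_ == _); rewrite ?normr1 ?normr0. Qed.

Let bC i a : `|C i a| <= B.
Proof. by have [x ->] := hC i. Qed.

Let bPm x a : `|Pm x a| <= B.
Proof. by rewrite /Pm; have [i [-> _]] := @projC_spec R p k C (fun a => mu a x) k0. Qed.

Let bPh x a : `|Ph x a| <= B.
Proof. by rewrite /Ph; have [i [-> _]] := @projC_spec R p k C (fun a => muh a x) k0. Qed.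

Let mPm a : measurable_fun setT (fun x => Pm x a).
Proof. exact: (@measurable_projC R p k C dX TX mu mmu a). Qed.

Let mPh a : measurable_fun setT (fun x => Ph x a).
Proof. exact: (@measurable_projC R p k C dX TX muh mmuh a). Qed.

Let mgh a : measurable_fun setT (gh a).
Proof.
apply: measurable_funM; first by apply: measurable_funB.
by apply: measurableT_comp => //; exact: measurable_inv.
Qed.

Let mg a : measurable_fun setT (g a).
Proof.
apply: measurable_funM; first by apply: measurable_funB.
by apply: measurableT_comp => //; exact: measurable_inv.
Qed.

Let bgh a x : `|gh a x| <= 2 * B / eps.
Proof.
have e0 : 0 < pih a x by apply: lt_le_trans (bpih a x).
rewrite /gh normrM normfV (gtr0_norm e0) ler_pdivrMr // mulrAC ler_pdivlMr //.
have h : `|muh a x - Ph x a| <= 2 * B.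
  apply: (le_trans (ler_normB _ _)).
  have := bmuh a x; have := bPh x a; lra.
by apply: ler_pM => //; apply: ltW.
Qed.

Let mZ a : measurable_fun setT (Z a).
Proof.
apply: measurable_funM => //; apply: measurable_funB => //.
exact: measurableT_comp.
Qed.

Let bZ a t : `|Z a t| <= `|Y t| + B.
Proof.
rewrite /Z normrM; apply: (le_trans (ler_wpM2r _ (bI a t))) => //.
rewrite mul1r; apply: (le_trans (ler_normB _ _)).
by rewrite lerD2l.
Qed.

Let iYabs : P.-integrable setT (EFin \o (fun t => `|Y t| + B)).
Proof. by apply: int_add; [apply: int_abs|apply: int_cst]. Qed.

Let iZ a : P.-integrable setT (EFin \o Z a).
Proof. exact: (int_dom (mZ a) iYabs (bZ a)). Qed.

Let hZ a S : measurable S -> (\int[P]_t ((Z a t * \1_S (X t))%:E) = 0)%E.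
Proof.
move=> mS.
have m1S : measurable_fun setT (fun t => \1_S (X t) : R).
  by apply: measurableT_comp => //; exact: measurable_indic.
have b1S t : `|\1_S (X t) : R| <= 1.
  by rewrite indicE; case: (_ \in _); rewrite ?normr1 ?normr0.
have i1 : P.-integrable setT (EFin \o (fun t => Y t * (A t == a)%:R * \1_S (X t))).
  apply: (int_dom _ (int_abs iY)).
    by apply: measurable_funM => //; apply: measurable_funM => //; exact: mI.
  move=> t /=; rewrite !normrM -[X in _ <= X]mulr1 -mulrA ler_wpM2l //.
  by rewrite -[X in _ <= X](mulr1 1) ler_pM //; first exact: (bI a t).
have i2 : P.-integrable setT (EFin \o (fun t => mu a (X t) * (A t == a)%:R * \1_S (X t))).
  apply: (int_bdd B).
    apply: measurable_funM => //; apply: measurable_funM => //; last exact: mI.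
    exact: measurableT_comp.
  move=> t /=; rewrite !normrM -[X in _ <= X]mulr1 -mulrA ler_pM //.
  by rewrite -[X in _ <= X](mulr1 1) ler_pM //; first exact: (bI a t).
under eq_integral => t _.
  rewrite (_ : Z a t * \1_S (X t) = Y t * (A t == a)%:R * \1_S (X t)
                 - mu a (X t) * (A t == a)%:R * \1_S (X t)); last by rewrite /Z /I; ring.
  rewrite EFinB.
  over.
rewrite /= integralB_EFin // ((hOR a).2 S mS) subee //.
by apply: integrable_fin_num => //.
Qed.

Let D_eq t : phiC C pih muh (Y t) (A t) (X t) - phiC C pi mu (Y t) (A t) (X t)
  = \sum_(a < p) (Z a t * (2 * (gh a (X t) - g a (X t)))) + F2 t.
Proof.
rewrite !phiC_eq /F2 /Z /gh /g /I /Pm /Ph -sumrB -!big_split /=.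
by apply: eq_bigr => a _; ring.
Qed.

Let F2_bound t : `|F2 t| <= KK * \sum_(a < p) `|muh a (X t) - mu a (X t)|.
Proof.
rewrite /F2 /KK mulrDl; apply: (le_trans (ler_normD _ _)); apply: lerD.
  rewrite mulr_sumr; apply: (le_trans (ler_norm_sum _ _ _)); apply: ler_sum => a _.
  rewrite normrM normrM normrM (ger0_norm (_ : (0:R) <= 2)) //.
  have h1 := bI a t; have h2 := bgh a (X t).
  have e0 : 0 <= 2 * B / eps by apply: divr_ge0 => //; [apply: mulr_ge0|apply: ltW].
  have : `|I a t| * `|muh a (X t) - mu a (X t)| <= `|muh a (X t) - mu a (X t)|.
    by rewrite -[X in _ <= X]mul1r ler_wpM2r.
  move=> h3.
  have -> : 4 * B / eps * `|muh a (X t) - mu a (X t)| =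
     2 * (`|muh a (X t) - mu a (X t)| * (2 * B / eps)) by rewrite /=; ring.
  rewrite -mulrA ler_wpM2l //.
  rewrite [`|mu a (X t) - _|]distrC.
  apply: (le_trans (ler_wpM2r (normr_ge0 _) h3)).
  by rewrite ler_wpM2l.
rewrite sumrB.
have := @projC_lip R p k B C (fun a => muh a (X t)) (fun a => mu a (X t)) k0
  (fun a => bmuh a (X t)) (fun a => bmu a (X t)) bC.
by rewrite /sqdist.
Qed.

Let W a t := phi1 pi mu a (Y t) (A t) (X t) - mu a (X t).

Let Zg_eq a t : Z a t * g a (X t) = W a t * (mu a (X t) - Pm (X t) a).
Proof.
rewrite /Z /g /W /phi1 /I; case: (eqVneq (A t) a) => [->|ne].
  by ring.
by rewrite !mul0r addrK mul0r.
Qed.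

Let phf a t := phi1 pi mu a (Y t) (A t) (X t).

Let mphf a : measurable_fun setT (phf a).
Proof. by apply/measurable_EFinP; exact: (measurable_int _ (iphi a)). Qed.

Let iH a : P.-integrable setT (EFin \o (fun t => `|phf a t| + B)).
Proof. by apply: int_add; [apply: int_abs; exact: (iphi a)|exact: int_cst]. Qed.

Let bW a t : `|W a t| <= `|phf a t| + B.
Proof. by apply: (le_trans (ler_normB _ _)); rewrite lerD2l. Qed.

Let iZg a : P.-integrable setT (EFin \o (fun t => Z a t * g a (X t))).
Proof.
apply: (int_dom _ (int_scale (2 * B) (iH a))).
  apply: measurable_funM; first exact: mZ.
  exact: measurableT_comp.
move=> t; rewrite Zg_eq normrM mulrC; apply: ler_pM => //.
  apply: (le_trans (ler_normB _ _)).
  have := bmu a (X t); have := bPm (X t) a; lra.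
Qed.

Let iZgh a : P.-integrable setT (EFin \o (fun t => Z a t * gh a (X t))).
Proof.
apply: (int_dom _ (int_scale (2 * B / eps) iYabs)).
  apply: measurable_funM; first exact: mZ.
  exact: measurableT_comp.
move=> t; rewrite normrM mulrC; apply: ler_pM => //.
Qed.

Let iF1a a : P.-integrable setT
   (EFin \o (fun t => Z a t * (2 * (gh a (X t) - g a (X t))))).
Proof.
have := int_add (int_scale 2 (iZgh a)) (int_scale (-2) (iZg a)).
by apply: eq_integrable => // t _ /=; congr EFin; ring.
Qed.

Let mF2 : measurable_fun setT F2.
Proof.
rewrite /F2; apply: measurable_funD; apply: measurable_sum => a.
  apply: measurable_funM; last exact: measurableT_comp.
  apply: measurable_funM => //; apply: measurable_funM; first exact: mI.
  by apply: measurable_funB; exact: measurableT_comp.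
apply: measurable_funB; apply: measurable_funX; apply: measurable_funB;
  try exact: measurableT_comp.
- by apply: (measurableT_comp (f := fun x => Ph x a)).
- by apply: (measurableT_comp (f := fun x => Pm x a)).
Qed.

Let iF2 : P.-integrable setT (EFin \o F2).
Proof.
apply: (int_bdd (KK * \sum_(a < p) (2 * B))) => // t.
apply: (le_trans (F2_bound t)); apply: ler_wpM2l.
  rewrite /KK; apply: addr_ge0; last by apply: mulr_ge0.
  by apply: divr_ge0; [apply: mulr_ge0|apply: ltW].
apply: ler_sum => a _; apply: (le_trans (ler_normB _ _)).
have := bmu a (X t); have := bmuh a (X t); lra.
Qed.

Lemma KK_ge0 : 0 <= KK.
Proof.
rewrite /KK; apply: addr_ge0; last by apply: mulr_ge0.
by apply: divr_ge0; [apply: mulr_ge0|apply: ltW].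
Qed.

Lemma core_bound :
  (`| \int[P]_t ((phiC C pih muh (Y t) (A t) (X t)
                  - phiC C pi mu (Y t) (A t) (X t))%:E) |
   <= KK%:E * \sum_(a < p) \int[P]_t ((`|muh a (X t) - mu a (X t)|)%:E))%E.
Proof.
pose F1 t := \sum_(a < p) Z a t * (2 * (gh a (X t) - g a (X t))).
have iF1 : P.-integrable setT (EFin \o F1).
  have := @integrable_sum _ _ _ P _ measurableT _ (index_enum 'I_p) xpredT
    (fun a t => (Z a t * (2 * (gh a (X t) - g a (X t))))%:E) (fun a _ => iF1a a).
  by apply: eq_integrable => // t _ /=; rewrite /F1 sumEFin.
rewrite (eq_integral (fun t => ((EFin \o F1) \+ (EFin \o F2)) t)); last first.
  by move=> t _; rewrite /= D_eq EFinD.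
rewrite integralD_EFin //.
have -> : (\int[P]_x (EFin \o F1) x = 0)%E.
  under eq_integral => t _ do rewrite /= /F1 -sumEFin.
  rewrite integral_sum //.
  apply: big1 => a _.
  have mga : measurable_fun setT (fun x => 2 * (gh a x - g a x)).
    by apply: measurable_funM => //; apply: measurable_funB.
  exact: (@G_gen R dT dX T TX P X (Z a) mX (mZ a) (iZ a) (hZ a)
            (fun x => 2 * (gh a x - g a x)) mga (iF1a a)).
rewrite add0e.
apply: (le_trans (le_abse_integral _ _ _)) => //.
  exact: measurable_int iF2.
have iS : forall a, P.-integrable setT
    (EFin \o (fun t => `|muh a (X t) - mu a (X t)|)).
  move=> a; apply: (int_bdd (2 * B)).
    apply: measurableT_comp => //; apply: measurable_funB; exact: measurableT_comp.
  move=> t; rewrite normr_id; apply: (le_trans (ler_normB _ _)).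
  have := bmu a (X t); have := bmuh a (X t); lra.
apply: (@le_trans _ _ (\int[P]_t ((KK * \sum_(a < p) `|muh a (X t) - mu a (X t)|)%:E))%E).
  apply: ge0_le_integral => //.
  - by apply: measurableT_comp => //; exact: measurable_int iF2.
  - apply/measurable_EFinP; apply: measurable_funM => //.
    apply: measurable_sum => a; apply: measurableT_comp => //.
    by apply: measurable_funB; exact: measurableT_comp.
  - by move=> t _ /=; rewrite lee_fin F2_bound.
under eq_integral => t _ do rewrite EFinM.
rewrite integralZl //; last first.
  have := @integrable_sum _ _ _ P _ measurableT _ (index_enum 'I_p) xpredT
    (fun a t => (`|muh a (X t) - mu a (X t)|)%:E) (fun a _ => iS a).
  by apply: eq_integrable => // t _ /=; rewrite sumEFin.
under eq_integral => t _ do rewrite -sumEFin.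
by rewrite integral_sum.
Qed.
End Core.

Lemma meas_phiC (R : realType) (p : nat) dT dX (T : measurableType dT)
  (TX : measurableType dX) (Y : T -> R) (A : T -> 'I_p) (X : T -> TX)
  (k : nat) (C : 'I_k -> 'I_p -> R) (pi' mu' : 'I_p -> TX -> R) :
  measurable_fun setT Y -> measurable_fun setT X ->
  (forall a, measurable (A @^-1` [set a])) ->
  (forall a, measurable_fun setT (pi' a)) -> (forall a, measurable_fun setT (mu' a)) ->
  measurable_fun setT (fun t => phiC C pi' mu' (Y t) (A t) (X t)).
Proof.
move=> mY mX mA mpi mmu.
have mI a : measurable_fun setT (fun t => ((A t == a)%:R : R)).
  have -> : (fun t => ((A t == a)%:R : R)) = \1_(A @^-1` [set a]).
    apply/funext => t; rewrite indicE; case: eqP => [<-|h].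
      by rewrite mem_set.
    by rewrite memNset.
  exact: measurable_indic.
have mP a : measurable_fun setT (fun t => projC C (fun b => mu' b (X t)) a).
  apply: (@measurable_projC R p k C dT T (fun b t => mu' b (X t))).
  by move=> b; exact: measurableT_comp.
have mm a : measurable_fun setT (fun t => mu' a (X t)) by move=> ?; exact: measurableT_comp.
have -> : (fun t => phiC C pi' mu' (Y t) (A t) (X t)) = (fun t => \sum_(a < p)
    (2 * ((A t == a)%:R / pi' a (X t) * (Y t - mu' a (X t))) *
       (mu' a (X t) - projC C (fun b => mu' b (X t)) a)
     + (mu' a (X t) - projC C (fun b => mu' b (X t)) a) ^+ 2)).
  by apply/funext => t; rewrite phiC_eq.
apply: measurable_sum => a; apply: measurable_funD.
  apply: measurable_funM; last by apply: measurable_funB.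
  apply: measurable_funM => //; apply: measurable_funM; last by apply: measurable_funB.
  apply: measurable_funM => //.
  apply: measurableT_comp; first exact: measurable_inv.
  exact: measurableT_comp.
by apply: measurable_funX; apply: measurable_funB.
Qed.

Lemma clip_close (R : realType) (B y m : R) : `|m| <= B ->
  `|Num.max (- B) (Num.min y B) - m| <= `|y - m|.
Proof.
move=> hm; have := hm; rewrite ler_norml => /andP[h1 h2].
case: (leP y B) => hy; case: (leP (- B) y) => hy2 //.
- rewrite (ler0_norm (_ : - B - m <= 0)) ?(ler0_norm (_ : y - m <= 0)); lra.
- have B0 : - B <= B by lra.
  rewrite (max_idPr B0) (ger0_norm (_ : 0 <= B - m)) ?(ger0_norm (_ : 0 <= y - m)); lra.
- lra.
Qed.

Lemma phiC_ext (R : realType) (p : nat) dX (TX : measurableType dX) (k : nat)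
  (C : 'I_k -> 'I_p -> R) (pi mu pi' mu' : 'I_p -> TX -> R) y b x :
  (forall a, pi a x = pi' a x) -> (forall a, mu a x = mu' a x) ->
  phiC C pi mu y b x = phiC C pi' mu' y b x.
Proof.
move=> hp hm; rewrite /phiC.
have -> : (fun a => mu a x) = (fun a => mu' a x) by apply/funext => a; exact: hm.
by apply: eq_bigr => a _; rewrite /phi1 /phi2 !hp !hm.
Qed.

Theorem lemmaA8 (R : realType) (p : nat) (B eps : R) :
  0 < eps ->
  exists K : R, forall (dT dX : measure_display)
    (T : measurableType dT) (TX : measurableType dX) (P : probability T R)
    (Y : T -> R) (A : T -> 'I_p) (X : T -> TX)
    (mu pi muh pih : 'I_p -> TX -> R),
    measurable_fun setT Y -> measurable_fun setT X ->
    (forall a, measurable (A @^-1` [set a])) ->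
    (forall a, measurable_fun setT (muh a)) ->
    (forall a, measurable_fun setT (pih a)) ->
    P.-integrable setT (EFin \o Y) ->
    is_outcome_regression P Y A X mu ->
    is_propensity P A X pi ->
    (forall a, P.-integrable setT
       (fun t => (phi1 pi mu a (Y t) (A t) (X t))%:E)) ->
    (forall a x, `|mu a x| <= B) ->
    (forall a, {ae P, forall t, `|muh a (X t)| <= B}) ->
    (forall a, {ae P, forall t, eps <= pih a (X t) <= 1 - eps}) ->
    forall (k : nat) (C : 'I_k -> 'I_p -> R),
      (0 < k)%N -> injective C ->
      (forall i, exists x, C i = (fun a => mu a x)) ->
      (`| \int[P]_t ((phiC C pih muh (Y t) (A t) (X t)
                      - phiC C pi mu (Y t) (A t) (X t))%:E) |
       <= K%:E *
          (\big[maxe/0]_(a < p)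
              'N[P]_(1%:E)[(fun t => (muh a (X t) - mu a (X t))%:E)]
           + \big[maxe/0]_(a < p)
              ('N[P]_(2%:E)[(fun t => (muh a (X t) - mu a (X t))%:E)]
               * ('N[P]_(2%:E)[(fun t => (muh a (X t) - mu a (X t))%:E)]
                  + 'N[P]_(2%:E)[(fun t => (pih a (X t) - pi a (X t))%:E)]))))%E.
Proof.
move=> heps.
exists (p%:R * (4 * `|B| / eps + 4 * `|B|)).
move=> dT dX T TX P Y A X mu pi muh pih mY mX mA mmuh mpih iY hOR hPr iphi
  bmu bmuh bpih k C k0 Cinj hC.
set B' := `|B|.
have B'0 : 0 <= B' := normr_ge0 B.
have bmu' a x : `|mu a x| <= B' := le_trans (bmu a x) (ler_norm B).
pose mh a x := Num.max (- B') (Num.min (muh a x) B').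
pose ph a x := Num.max eps (pih a x).
have mmh a : measurable_fun setT (mh a).
  apply: measurable_maxr; first exact: measurable_cst.
  by apply: measurable_minr => //; exact: measurable_cst.
have mph a : measurable_fun setT (ph a).
  by apply: measurable_maxr => //; exact: measurable_cst.
have bmh a x : `|mh a x| <= B'.
  rewrite ler_norml /mh le_max lexx /= ge_max ge_min lexx orbT andbT.
  by rewrite -subr_ge0 opprK -mulr2n mulrn_wge0.
have bph a x : eps <= ph a x by rewrite /ph le_max lexx.
have mpi a := (hPr a).1.
have core := @core_bound R p B' eps heps B'0 dT dX T TX P Y A X mu pi mh ph
  mY mX mA mmh mph iY hOR mpi iphi bmu' bmh bph k C k0 hC.
have aeall : {ae P, forall t, forall a,
    muh a (X t) = mh a (X t) /\ pih a (X t) = ph a (X t)}.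
  have H : forall n, {ae P, forall t, forall (Hn : (n < p)%N),
      muh (Ordinal Hn) (X t) = mh (Ordinal Hn) (X t) /\
      pih (Ordinal Hn) (X t) = ph (Ordinal Hn) (X t)}.
    move=> n; have [hn|hn] : (n < p)%N \/ (p <= n)%N by case: ltnP; [left|right].
    2:{
      by apply: aeW => t Hn; exfalso; move: Hn; rewrite ltnNge hn. }
    move: (bmuh (Ordinal hn)) (bpih (Ordinal hn)); apply: filterS2 => t h1 h2 Hn.
    have -> : Ordinal Hn = Ordinal hn by apply: val_inj.
    move: h1; rewrite ler_norml => /andP[h1 h1'].
    move: h2 => /andP[h2 h2'].
    have hB : B <= B' by exact: ler_norm.
    split.
      rewrite /mh (min_idPl (le_trans h1' hB)) (max_idPr _) //.
      by apply: le_trans h1; rewrite lerN2.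
    by rewrite /ph (max_idPr h2).
  move: (ae_foralln H); apply: filterS => t Ht a.
  have := Ht a (ltn_ord a).
  by have -> : Ordinal (ltn_ord a) = a by apply: val_inj.
have eqI : (\int[P]_t ((phiC C pih muh (Y t) (A t) (X t)
                  - phiC C pi mu (Y t) (A t) (X t))%:E)
   = \int[P]_t ((phiC C ph mh (Y t) (A t) (X t)
                  - phiC C pi mu (Y t) (A t) (X t))%:E))%E.
  apply: ae_eq_integral => //.
  - apply/measurable_EFinP; apply: measurable_funB; apply: meas_phiC => // a;
      exact: (hOR a).1.
  - apply/measurable_EFinP; apply: measurable_funB; apply: meas_phiC => // a;
      exact: (hOR a).1.
  - move: aeall; apply: filterS => t Ht _.
    congr (_%:E); congr (_ - _); apply: phiC_ext => a.
      exact: (Ht a).2.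
    exact: (Ht a).1.
rewrite eqI; apply: (le_trans core).
set KK := 4 * B' / eps + 4 * B'.
have KK0 : 0 <= KK.
  rewrite /KK; apply: addr_ge0; last by apply: mulr_ge0.
  by apply: divr_ge0; [apply: mulr_ge0|apply: ltW].
pose N1 a := ('N[P]_(1%:E)[(fun t => (muh a (X t) - mu a (X t))%:E)])%E.
have step1 : (\sum_(a < p) \int[P]_t ((`|mh a (X t) - mu a (X t)|)%:E)
     <= p%:R%:E * \big[maxe/0%E]_(a < p) N1 a)%E.
  rewrite mule_natl.
  have -> : ((\big[maxe/0%E]_(a < p) N1 a) *+ p =
      \sum_(a < p) \big[maxe/0%E]_(a < p) N1 a)%E by rewrite sumr_const card_ord.
  apply: lee_sum => a _.
  apply: (le_trans _ (le_bigmax _ N1 a)).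
  rewrite /N1 Lnorm1; apply: ge0_le_integral => //.
  - apply/measurable_EFinP; apply: measurableT_comp => //.
    apply: measurable_funB; apply: measurableT_comp => //; exact: (hOR a).1.
  - apply: measurableT_comp => //; apply/measurable_EFinP.
    apply: measurable_funB; apply: measurableT_comp => //; exact: (hOR a).1.
  - by move=> t _ /=; rewrite lee_fin clip_close.
apply: (le_trans (lee_wpmul2l _ step1)); first by rewrite lee_fin.
rewrite muleA -EFinM mulrC.
apply: lee_wpmul2l; first by rewrite lee_fin mulr_ge0.
apply: lee_paddr => //; exact: bigmax_ge_id.
Qed.
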